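(* Let $G$ be an abelian group (written multiplicatively) and let $A$ and $B$ be nonempty finite subsets of $G$. Assume that for every nontrivial finite subgroup $H$ of $G$ and all elements $a,b\in G$ we have $|aH\cap A|+|bH\cap B|\leq |H|+1$. Then for all nonempty subsets $S\subset A$ and $T\subset B$, we have $|ST|\geq |S|+|T|-1$.
   Context: For subsets $S,T$ of $G$, $ST=\{st: s\in S, t\in T\}$. *)

(* Defs.v *)
(* An abelian group is a zmodType (additive notation);
   finite subsets are finmap's {fset G}. *)
From HB Require Import structures.
From mathcomp Require Import all_boot all_order all_algebra.
From mathcomp Require Import finmap.
Set Implicit Arguments. Unset Strict Implicit. Unset Printing Implicit Defensive.
Import GRing.Theory.
Local Open Scope fset_scope.
Local Open Scope ring_scope.

Definition sumset (G : zmodType) (S T : {fset G}) : {fset G} :=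
  [fset s + t | s in S, t in T].

Definition is_fsubgroup (G : zmodType) (H : {fset G}) : Prop :=
  0 \in H /\ (forall x y, x \in H -> y \in H -> x - y \in H).

Definition fcoset (G : zmodType) (a : G) (H : {fset G}) : {fset G} :=
  [fset a + h | h in H].

(* Main.v *)
Require Import Defs.
From HB Require Import structures.
From mathcomp Require Import all_boot all_order all_algebra.
From mathcomp Require Import finmap.
From mathcomp Require Import zify.
Local Open Scope fset_scope.

Module Helpers.
Set Implicit Arguments. Unset Strict Implicit. Unset Printing Implicit Defensive.
Import GRing.Theory.
Section K.
Variable G : zmodType.
Implicit Types (X Y Z A B C D H K : {fset G}).
Local Open Scope ring_scope.

Definition per K X := forall x k, x \in X -> k \in K -> x + k \in X.

Lemma card_inj_imfset (f : G -> G) X : injective f -> #|` [fset f x | x in X]| = #|` X|.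
Proof. by move=> fi; rewrite card_imfset. Qed.

Lemma sumsetP X Y z : reflect (exists2 x, x \in X & exists2 y, y \in Y & z = x + y) (z \in sumset X Y).
Proof. exact: imfset2P. Qed.

Lemma mem_sumset X Y x y : x \in X -> y \in Y -> x + y \in sumset X Y.
Proof. by move=> xX yY; apply/sumsetP; exists x => //; exists y. Qed.

Lemma in_fcoset a K z : (z \in fcoset a K) = (z - a \in K).
Proof.
apply/imfsetP/idP => [[h hK ->]|zK]; first by rewrite addrC addKr.
by exists (z - a) => //; rewrite addrC subrK.
Qed.

Lemma card_fcoset a K : #|` fcoset a K| = #|` K|.
Proof. by apply: card_inj_imfset; apply: addrI. Qed.

Lemma sgN K x : is_fsubgroup K -> x \in K -> - x \in K.
Proof. by case=> K0 KB xK; rewrite -sub0r KB. Qed.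

Lemma sgB K x y : is_fsubgroup K -> x \in K -> y \in K -> x - y \in K.
Proof. by case=> _ KB; apply: KB. Qed.

Lemma sgD K x y : is_fsubgroup K -> x \in K -> y \in K -> x + y \in K.
Proof. by move=> sK xK yK; have := sgB sK xK (sgN sK yK); rewrite opprK. Qed.

Lemma sg0 K : is_fsubgroup K -> 0 \in K.
Proof. by case. Qed.

Lemma sgI K1 K2 : is_fsubgroup K1 -> is_fsubgroup K2 -> is_fsubgroup (K1 `&` K2).
Proof.
move=> s1 s2; split; first by rewrite in_fsetI !sg0.
by move=> x y; rewrite !in_fsetI => /andP[x1 x2] /andP[y1 y2]; rewrite !sgB.
Qed.

Lemma sg_gt0 K : is_fsubgroup K -> (0 < #|` K|)%N.
Proof. by move=> sK; rewrite cardfs_gt0; apply/fset0Pn; exists 0; apply: sg0. Qed.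

Lemma per_sub K K' X : per K X -> K' `<=` K -> per K' X.
Proof. by move=> pK /fsubsetP sub x k xX kK; apply: pK => //; apply: sub. Qed.

Lemma per_sumsetl K X Y : per K X -> per K (sumset X Y).
Proof.
move=> pX z k /sumsetP[x xX [y yY ->]] kK.
by rewrite addrAC mem_sumset // pX.
Qed.

Lemma per_sumsetr K X Y : per K Y -> per K (sumset X Y).
Proof.
move=> pY z k /sumsetP[x xX [y yY ->]] kK.
by rewrite -addrA mem_sumset // pY.
Qed.

Lemma per_sumsetK K X : is_fsubgroup K -> per K (sumset X K).
Proof. by move=> sK; apply: per_sumsetr => x k xK kK; apply: sgD. Qed.

Lemma sub_sumsetK K X : is_fsubgroup K -> X `<=` sumset X K.
Proof. by move=> sK; apply/fsubsetP => x xX; rewrite -[x]addr0 mem_sumset // sg0. Qed.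

Lemma sumset_perE K X : is_fsubgroup K -> per K X -> sumset X K = X.
Proof.
move=> sK pX; apply/eqP; rewrite eqEfsubset sub_sumsetK // andbT.
by apply/fsubsetP => z /sumsetP[x xX [k kK ->]]; apply: pX.
Qed.

Lemma perN K X x k : is_fsubgroup K -> per K X -> x + k \in X -> k \in K -> x \in X.
Proof. by move=> sK pX xkX kK; rewrite -(addrK k x) pX // sgN. Qed.

Lemma per_U K X Y : per K X -> per K Y -> per K (X `|` Y).
Proof.
by move=> pX pY x k; rewrite !in_fsetU => /orP[xX|xY] kK; [rewrite pX|rewrite pY ?orbT].
Qed.

Lemma per_D K X Y : is_fsubgroup K -> per K X -> per K Y -> per K (X `\` Y).
Proof.
move=> sK pX pY x k; rewrite !in_fsetD => /andP[xY xX] kK; rewrite pX // andbT.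
by apply: contra xY => xkY; apply: perN xkY kK.
Qed.

Lemma per_I K X Y : per K X -> per K Y -> per K (X `&` Y).
Proof. by move=> pX pY x k; rewrite !in_fsetI => /andP[xX xY] kK; rewrite pX ?pY. Qed.

Lemma per_fcoset a K : is_fsubgroup K -> per K (fcoset a K).
Proof. by move=> sK x k; rewrite !in_fcoset => xK kK; rewrite addrAC sgD. Qed.


Lemma fcoset_sub a K X : is_fsubgroup K -> per K X -> a \in X -> fcoset a K `<=` X.
Proof.
move=> sK pX aX; apply/fsubsetP => z; rewrite in_fcoset => zK.
by rewrite -(subrK a z) addrC pX.
Qed.

Lemma a_in_fcoset a K : is_fsubgroup K -> a \in fcoset a K.
Proof. by move=> sK; rewrite in_fcoset subrr sg0. Qed.

Lemma per_dvd K X : is_fsubgroup K -> per K X -> (#|` K| %| #|` X|)%N.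
Proof.
move=> sK; move: {2}#|` X| (leqnn #|` X|) => n; elim: n X => [|n IH] X.
  by rewrite leqn0 => /eqP ->.
move=> Xn pX; have [->|[x xX]] := fset_0Vmem X; first by rewrite cardfs0 dvdn0.
have sub := fcoset_sub sK pX xX.
set X' := X `\` fcoset x K.
have pX' : per K X' by apply: per_D => //; apply: per_fcoset.
have cX : #|` X| = (#|` K| + #|` X'|)%N.
  by rewrite -(cardfsID (fcoset x K) X) (fsetIidPr sub) card_fcoset.
have K0 := sg_gt0 sK.
have X'n : (#|` X'| <= n)%N by lia.
by rewrite cX dvdn_addr // IH.
Qed.

Lemma small_inter Z K z0 : z0 \in Z -> (forall z, z \in Z -> z - z0 \in K) -> (#|` Z| <= #|` K|)%N.
Proof.
move=> _ zK; rewrite -(@card_inj_imfset (fun z => z - z0) Z); last by apply: addIr.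
by apply: fsubset_leq_card; apply/fsubsetP => w /imfsetP[z zZ ->]; apply: zK.
Qed.

Lemma sumset0 X : sumset fset0 X = fset0.
Proof. by apply/fsetP => z; rewrite in_fset0; apply/sumsetP => -[x]. Qed.

Lemma coset_count H K X : is_fsubgroup H -> is_fsubgroup K -> H `<=` K -> per H X ->
  (#|` sumset X K| * #|` H| <= #|` X| * #|` K|)%N.
Proof.
move=> sH sK HK; move: {2}#|` X| (leqnn #|` X|) => n; elim: n X => [|n IH] X.
  by rewrite leqn0 cardfs_eq0 => /eqP ->; rewrite sumset0 cardfs0.
move=> Xn pX; have [->|[x xX]] := fset_0Vmem X.
  by rewrite sumset0 cardfs0.
have sub := fcoset_sub sH pX xX.
set X' := X `\` fcoset x H.
have pX' : per H X' by apply: per_D => //; apply: per_fcoset.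
have cX : #|` X| = (#|` H| + #|` X'|)%N.
  by rewrite -(cardfsID (fcoset x H) X) (fsetIidPr sub) card_fcoset.
have H0 := sg_gt0 sH.
have X'n : (#|` X'| <= n)%N by lia.
have IH' := IH X' X'n pX'.
have : sumset X K `<=` fcoset x K `|` sumset X' K.
  apply/fsubsetP => z /sumsetP[y yX [k kK ->]]; rewrite in_fsetU.
  case: (boolP (y \in X')) => yX'; first by rewrite mem_sumset ?orbT.
  have: y \in fcoset x H by move: yX'; rewrite in_fsetD yX andbT negbK.
  rewrite in_fcoset => yH; rewrite in_fcoset.
  have -> : y + k - x = (y - x) + k by rewrite addrAC.
  by rewrite sgD // (fsubsetP HK).
move/fsubset_leq_card => le1.
have le2 := cardfsUI (fcoset x K) (sumset X' K).
rewrite card_fcoset in le2.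
have le3 : (#|` sumset X K| <= #|` K| + #|` sumset X' K|)%N by lia.
rewrite cX mulnDl; apply: (leq_trans (leq_mul le3 (leqnn _))).
by rewrite mulnDl mulnC leq_add2l.
Qed.

Definition stab C : {fset G} := [fset d in [fset c1 - c2 | c1 in C, c2 in C] | all (fun x => x + d \in C) C].

Lemma trans_back C d : (forall x, x \in C -> x + d \in C) -> forall x, x \in C -> x - d \in C.
Proof.
move=> Cd x xC.
have sub : [fset y + d | y in C] `<=` C by apply/fsubsetP => z /imfsetP[y yC ->]; apply: Cd.
have eqc : #|` [fset y + d | y in C]| = #|` C| by apply: card_inj_imfset; apply: addIr.
have/eqP eqs : [fset y + d | y in C] == C.
  by case: (fsubset_leqif_cards sub) => _ <-; rewrite eqc.
by move: xC; rewrite -{1}eqs => /imfsetP[y yC ->]; rewrite addrK.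
Qed.

Lemma stabP C d : C != fset0 -> reflect (forall x, x \in C -> x + d \in C) (d \in stab C).
Proof.
move=> C0; apply: (iffP idP).
  by rewrite in_fset /= => /andP[_ /allP H] x xC; apply: H.
move: C0 => /fset0Pn[c cC] H; rewrite in_fset /=; apply/andP; split.
  apply/imfset2P; exists (c + d); first by rewrite /= H.
  by exists c => //; rewrite addrC addKr.
by apply/allP => x xC; apply: H.
Qed.

Lemma stab_sub C : C != fset0 -> is_fsubgroup (stab C).
Proof.
move=> C0; split; first by apply/stabP => // x; rewrite addr0.
move=> x y /stabP-/(_ C0) Hx /stabP-/(_ C0) Hy; apply/stabP => // z zC.
by rewrite addrA trans_back // Hx.
Qed.

Lemma per_stab C : C != fset0 -> per (stab C) C.
Proof. by move=> C0 x k xC /stabP-/(_ C0); apply. Qed.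

Lemma stab_max C K : C != fset0 -> per K C -> K `<=` stab C.
Proof. by move=> C0 pK; apply/fsubsetP => k kK; apply/stabP => // x xC; apply: pK. Qed.


Lemma subDD (a b c : G) : (a + c) - (b + c) = a - b.
Proof. by rewrite opprD addrACA subrr addr0. Qed.

Lemma fsub_card X Y : X `<=` Y -> (#|` X| <= #|` Y|)%N.
Proof. exact: fsubset_leq_card. Qed.

Lemma union_lemma C C1 C2 K1 K2 x :
  is_fsubgroup K1 -> is_fsubgroup K2 -> per K1 C1 -> per K2 C2 -> C1 `<=` C -> C2 `<=` C ->
  (#|` C `\` C1| < #|` K1|)%N -> (#|` C `\` C2| < #|` K2|)%N -> (#|` K1| <= #|` K2|)%N ->
  x \in C2 -> x \notin C1 ->
  (#|` K1| <= #|` C2 `\` C1| + #|` K1 `&` K2|)%N.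
Proof.
move=> s1 s2 p1 p2 /fsubsetP C1C /fsubsetP C2C h1 h2 k12 xC2 xC1.
set K12 := K1 `&` K2.
have s12 := sgI s1 s2.
set R := fcoset x K1. set Col := fcoset x K2.
set M := R `\` C2. set N := Col `\` C1.
have ColC2 := fcoset_sub s2 p2 xC2.
have: Col `&` C1 != fset0.
  apply/negP => /eqP e0.
  have : Col `<=` C `\` C1.
    apply/fsubsetP => z zCol; rewrite in_fsetD C2C ?(fsubsetP ColC2) // andbT.
    by apply/negP => zC1; move: (in_fset0 z); rewrite -e0 in_fsetI zCol zC1.
  move/fsub_card; rewrite card_fcoset; lia.
case/fset0Pn => y /fsetIP[yCol yC1].
have yx : y - x \in K2 by rewrite -in_fcoset.
have cCol : (#|` Col `&` C1| + #|` N| = #|` K2|)%N by rewrite cardfsID card_fcoset.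
have MN : (#|` M| <= #|` N|)%N.
  have [->|[m0 m0M]] := fset_0Vmem M; first by rewrite cardfs0.
  have m0x : m0 - x \in K1 by move: m0M; rewrite in_fsetD in_fcoset => /andP[].
  have m0C2 : m0 \notin C2 by move: m0M; rewrite in_fsetD => /andP[].
  set S1 : {fset G} := [fset m + (y - x) | m in M].
  set S2 : {fset G} := [fset m0 + (w - x) | w in Col `&` C1].
  have cS1 : #|` S1| = #|` M| by apply: card_inj_imfset; apply: addIr.
  have cS2 : #|` S2| = #|` Col `&` C1|.
    by apply: card_inj_imfset => a b /addrI /addIr.
  have sU : S1 `|` S2 `<=` C `\` C2.
    apply/fsubsetP => z; rewrite in_fsetU => /orP[] /imfsetP[w /= wM ->].
      move: wM; rewrite in_fsetD in_fcoset => /andP[wC2 wx].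
      have wC1 : w + (y - x) \in C1.
        by have := p1 _ _ yC1 wx; rewrite addrCA.
      rewrite in_fsetD C1C // andbT; apply: contra wC2 => H.
      exact: perN s2 p2 H yx.
    move: wM; rewrite in_fsetI => /andP[wCol wC1].
    have wx : w - x \in K2 by rewrite -in_fcoset.
    have wC1' : m0 + (w - x) \in C1.
      by have := p1 _ _ wC1 m0x; rewrite addrCA.
    rewrite in_fsetD C1C // andbT; apply: contra m0C2 => H.
    exact: perN s2 p2 H wx.
  have sI : (#|` S1 `&` S2| <= #|` K12|)%N.
    apply: (@small_inter _ _ (m0 + (y - x))).
      by rewrite in_fsetI; apply/andP; split; apply/imfsetP;
        [exists m0 | exists y; rewrite // in_fsetI yCol].
    move=> z; rewrite in_fsetI => /andP[] /imfsetP[m /= mM ->] /imfsetP[w /= wM eq].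
    rewrite in_fsetI; apply/andP; split.
      rewrite subDD -(subDD m m0 (-x)); apply: sgB => //.
        by move: mM; rewrite in_fsetD in_fcoset => /andP[].
    rewrite eq (addrC m0) (addrC m0) subDD; apply: sgB => //.
    by rewrite -in_fcoset; move: wM; rewrite in_fsetI => /andP[].
  have := cardfsUI S1 S2; have := fsub_card sU.
  rewrite cS1 cS2 => c1 c2.
  have dM : (#|` K12| %| #|` M|)%N.
    apply: per_dvd => //; apply: per_D => //.
      by apply: per_sub (per_fcoset (a:=x) s1) (fsubsetIl _ _).
    by apply: per_sub p2 (fsubsetIr _ _).
  have dN : (#|` K12| %| #|` N|)%N.
    apply: per_dvd => //; apply: per_D => //.
      by apply: (per_sub (per_fcoset (a:=x) s2)); apply: fsubsetIr.
    by apply: per_sub p1 (fsubsetIl _ _).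
  have lt : (#|` M| < #|` N| + #|` K12|)%N by lia.
  move: lt dM dN; have k0 := sg_gt0 s12.
  move: #|` M| #|` N| #|` K12| k0 => a b k k0 lt /dvdnP[p Ha] /dvdnP[q Hb]; subst a b.
  have : (p * k < q.+1 * k)%N by rewrite mulSn addnC.
  by rewrite ltn_pmul2r // ltnS leq_pmul2r.
set P1 := R `&` C2.
have cR : (#|` P1| + #|` M| = #|` K1|)%N by rewrite cardfsID card_fcoset.
have sU : P1 `|` N `<=` C2 `\` C1.
  apply/fsubsetP => z; rewrite in_fsetU in_fsetD => /orP[].
    rewrite in_fsetI in_fcoset => /andP[zx zC2]; rewrite zC2 andbT.
    apply: contra xC1 => zC1; apply: (perN s1 p1 (k := z - x)) => //.
    by rewrite addrCA subrr addr0.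
  by rewrite in_fsetD => /andP[zC1 zCol]; rewrite zC1 (fsubsetP ColC2).
have sI : (#|` P1 `&` N| <= #|` K12|)%N.
  apply: (@small_inter _ _ x).
    by rewrite !in_fsetI !in_fsetD xC1 xC2 !a_in_fcoset.
  move=> z; rewrite !in_fsetI in_fsetD !in_fcoset => /andP[/andP[z1 _] /andP[_ z2]].
  by rewrite z1 z2.
have := cardfsUI P1 N; have := fsub_card sU; lia.
Qed.


Lemma sumsetS X X' Y Y' : X `<=` X' -> Y `<=` Y' -> sumset X Y `<=` sumset X' Y'.
Proof.
move=> /fsubsetP XX /fsubsetP YY; apply/fsubsetP => z /sumsetP[x xX [y yY ->]].
by rewrite mem_sumset ?XX ?YY.
Qed.

Lemma sumsetC X Y : sumset X Y = sumset Y X.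
Proof.
by apply/fsetP => z; apply/sumsetP/sumsetP => -[x xX [y yY ->]]; exists y => //; exists x => //; rewrite addrC.
Qed.

Lemma sumset_perH H X Y : is_fsubgroup H -> per H (sumset X Y) ->
  sumset (sumset X H) (sumset Y H) = sumset X Y.
Proof.
move=> sH pH; apply/eqP; rewrite eqEfsubset (sumsetS (sub_sumsetK _ sH) (sub_sumsetK _ sH)) andbT.
apply/fsubsetP => z /sumsetP[u /sumsetP[x xX [h hH ->]] [v /sumsetP[y yY [h' h'H ->]] ->]].
have -> : x + h + (y + h') = (x + y) + (h + h') by rewrite addrACA.
by rewrite pH ?mem_sumset // sgD.
Qed.

Definition etrA X Y e : {fset G} := X `|` [fset y + e | y in Y].
Definition etrB X Y e : {fset G} := [fset y in Y | y + e \in X].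

Lemma in_etrB X Y e y : (y \in etrB X Y e) = (y \in Y) && (y + e \in X).
Proof. by rewrite /etrB !inE. Qed.

Lemma etr_card X Y e : (#|` etrA X Y e| + #|` etrB X Y e| = #|` X| + #|` Y|)%N.
Proof.
rewrite /etrA; have := cardfsUI X [fset y + e | y in Y].
rewrite card_inj_imfset; last by apply: addIr.
suff -> : X `&` [fset y + e | y in Y] = [fset y + e | y in etrB X Y e].
  by rewrite card_inj_imfset //; apply: addIr.
apply/fsetP => z; rewrite in_fsetI; apply/andP/imfsetP.
  by case=> zX /imfsetP[y yY ze]; exists y => //; rewrite in_etrB yY -ze zX.
by case=> y /=; rewrite in_etrB => /andP[yY yeX] ->; rewrite yeX; split => //; apply/imfsetP; exists y.
Qed.

Lemma etr_sub X Y e : sumset (etrA X Y e) (etrB X Y e) `<=` sumset X Y.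
Proof.
apply/fsubsetP => z /sumsetP[a]; rewrite /etrA in_fsetU => /orP[aX|/imfsetP[y yY ->]] [b];
  rewrite in_etrB => /andP[bY beX] ->; first by apply: mem_sumset.
rewrite (_ : y + e + b = (b + e) + y); first by apply: mem_sumset.
by rewrite addrC addrCA addrC.
Qed.

Lemma etrA_per H X Y e : per H X -> per H Y -> per H (etrA X Y e).
Proof.
move=> pX pY; apply: per_U => // z h /imfsetP[y yY ->] hH; apply/imfsetP; exists (y + h) => /=.
  exact: pY.
by rewrite addrAC.
Qed.

Lemma etrB_per H X Y e : per H X -> per H Y -> per H (etrB X Y e).
Proof.
move=> pX pY y h; rewrite !in_etrB => /andP[yY yeX] hH.
by rewrite pY //= addrAC pX.
Qed.

Lemma etrB_sub X Y e : etrB X Y e `<=` Y.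
Proof. by apply/fsubsetP => y; rewrite in_etrB => /andP[]. Qed.

Lemma card_split C X Y : Y `<=` C -> #|` C `\` X| = (#|` C `\` (X `|` Y)| + #|` Y `\` X|)%N.
Proof.
move=> /fsubsetP YC.
have := cardfsUI (C `\` (X `|` Y)) (Y `\` X).
have -> : (C `\` (X `|` Y)) `&` (Y `\` X) = fset0.
  by apply/fsetP => z; rewrite !inE; case: (z \in X); case: (z \in Y); case: (z \in C).
have -> : (C `\` (X `|` Y)) `|` (Y `\` X) = C `\` X.
  apply/fsetP => z; rewrite !inE; case zY: (z \in Y); case: (z \in X); case zC: (z \in C) => //=.
  by rewrite YC in zC.
by rewrite cardfs0 addn0.
Qed.

Lemma lt_card_proper X Y : X `<=` Y -> X != Y -> (#|` X| < #|` Y|)%N.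
Proof.
move=> XY XnY; case: (fsubset_leqif_cards XY) => le eq.
by rewrite ltn_neqAle le andbT eq.
Qed.


Lemma stab_nonempty_sum A B : A != fset0 -> B != fset0 -> sumset A B != fset0.
Proof.
move=> /fset0Pn[a aA] /fset0Pn[b bB]; apply/fset0Pn; exists (a + b); exact: mem_sumset.
Qed.

Lemma kneser n : forall A B, A != fset0 -> B != fset0 ->
  (#|` sumset B (stab (sumset A B))| <= n * #|` stab (sumset A B)|)%N ->
  (#|` sumset A (stab (sumset A B))| + #|` sumset B (stab (sumset A B))|
     <= #|` sumset A B| + #|` stab (sumset A B)|)%N.
Proof.
elim: n => [|n IH] A B A0 B0.
  have C0 := stab_nonempty_sum A0 B0.
  rewrite mul0n leqn0 cardfs_eq0 => /eqP E; case/fset0Pn: B0 => b bB.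
  have := fsubsetP (sub_sumsetK B (stab_sub C0)) b bB.
  by rewrite E in_fset0.
set C := sumset A B; set H := stab C => Bn.
have C0 : C != fset0 by apply: stab_nonempty_sum.
have sH : is_fsubgroup H by apply: stab_sub.
have pH : per H C by apply: per_stab.
set At := sumset A H; set Bt := sumset B H.
have AtBt : sumset At Bt = C by apply: sumset_perH.
have pAt : per H At by apply: per_sumsetK.
have pBt : per H Bt by apply: per_sumsetK.
have h0 := sg_gt0 sH.
rewrite leqNgt; apply/negP => Hlt.
set Ae := etrA At Bt; set Be := etrB At Bt.
set E := [fset e in [fset a - b | a in At, b in Bt] | Be e != Bt].
have cover : forall c, c \in C -> exists2 e, e \in E & c \in sumset (Ae e) (Be e).
  move=> c; rewrite -AtBt => /sumsetP[a aAt [b bBt ->]].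
  case: (boolP (has (fun e => a + b \in sumset (Ae e) (Be e)) E)) => [/hasP[e eE ce]|].
    by exists e.
  move/hasPn => nocov; exfalso.
  have allB : forall a' b', a' \in At -> b' \in Bt -> b' + (a' - b) \in At.
    move=> a' b' a'At b'Bt.
    have : Be (a' - b) == Bt.
      apply/negPn/negP => ne.
      have eE : a' - b \in E by rewrite !inE /= ne andbT; apply/imfset2P; exists a' => //; exists b.
      move: (nocov _ eE) => /negP; apply; apply: mem_sumset.
        by rewrite /Ae /etrA in_fsetU aAt.
      by rewrite /Be in_etrB bBt /= addrCA subrr addr0.
    by move/eqP => eB; move: b'Bt; rewrite -eB /Be in_etrB => /andP[].
  have c1 : (#|` At| <= #|` C|)%N.
    rewrite -(@card_inj_imfset (fun x => x + b) At); last by apply: addIr.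
    apply: fsub_card; apply/fsubsetP => z /imfsetP[x xAt ->].
    by rewrite -AtBt; apply: mem_sumset.
  have c2 : (#|` Bt| <= #|` H|)%N.
    apply: (@small_inter _ _ b bBt) => b' b'Bt; apply/stabP => // x.
    rewrite -{1}AtBt => /sumsetP[a1 a1At [b1 b1Bt ->]].
    have -> : a1 + b1 + (b' - b) = (b1 + (a1 - b)) + b'.
      by rewrite addrA (addrC b1) addrAC (addrAC a1) -addrA.
    by rewrite -AtBt; apply: mem_sumset => //; apply: allB.
  by move: Hlt; rewrite ltnNge; move/negP; apply; lia.
have Efacts : forall e, e \in E ->
   [/\ sumset (Ae e) (Be e) != fset0, sumset (Ae e) (Be e) `<=` C,
        is_fsubgroup (stab (sumset (Ae e) (Be e))), per (stab (sumset (Ae e) (Be e))) (sumset (Ae e) (Be e))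
      & (#|` C `\` sumset (Ae e) (Be e)| + #|` H| < #|` stab (sumset (Ae e) (Be e))|)%N].
  move=> e; rewrite !inE /= => /andP[/imfset2P[a aAt [b bBt ee]] neB].
  have bBe : b \in Be e by rewrite /Be in_etrB bBt /= ee addrCA subrr addr0.
  have Be0 : Be e != fset0 by apply/fset0Pn; exists b.
  have Ae0 : Ae e != fset0 by apply/fset0Pn; exists a; rewrite /Ae /etrA in_fsetU aAt.
  have Ce0 := stab_nonempty_sum Ae0 Be0.
  set Ce := sumset (Ae e) (Be e).
  set K := stab Ce.
  have sK : is_fsubgroup K by apply: stab_sub.
  have pK : per K Ce by apply: per_stab.
  have pAe : per H (Ae e) by apply: etrA_per.
  have pBe : per H (Be e) by apply: etrB_per.
  have CeC : Ce `<=` C by rewrite -AtBt; apply: etr_sub.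
  have HK : H `<=` K by apply: stab_max => //; apply: per_sumsetl.
  have ltB : (#|` Be e| < #|` Bt|)%N by apply: lt_card_proper => //; apply: etrB_sub.
  have dB : (#|` H| %| #|` Be e|)%N by apply: per_dvd.
  have leB : (#|` Be e| <= n * #|` H|)%N.
    move: dB ltB Bn => /dvdnP[p ->] lt1 lt2.
    have : (p * #|` H| < n.+1 * #|` H|)%N by apply: leq_trans lt1 lt2.
    by rewrite ltn_pmul2r // ltnS leq_pmul2r.
  have meas : (#|` sumset (Be e) K| <= n * #|` K|)%N.
    have := coset_count sH sK HK pBe.
    move=> cc; have : (#|` sumset (Be e) K| * #|` H| <= (n * #|` K|) * #|` H|)%N.
      apply: (leq_trans cc); rewrite mulnAC leq_mul2r leB orbT //.
    by rewrite leq_pmul2r.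
  have IHe := IH (Ae e) (Be e) Ae0 Be0 meas; rewrite -/Ce -/K in IHe.
  have a1 := fsub_card (sub_sumsetK (Ae e) sK).
  have b1 := fsub_card (sub_sumsetK (Be e) sK).
  have ec := etr_card At Bt e.
  have cC := cardfsDS CeC.
  have cCe := fsub_card CeC.
  rewrite -/Ae -/Be in ec; split => //; rewrite cC.
  have t : (#|` At| + #|` Bt| <= #|` Ce| + #|` K|)%N by rewrite -ec; exact: leq_trans (leq_add a1 b1) IHe.
  have t2 := leq_trans Hlt t.
  rewrite addnBAC // ltn_subLR; last exact: (leq_trans cCe (leq_addr _ _)).
  exact: t2.
have fin : forall D K, D `<=` C -> is_fsubgroup K -> per K D ->
    (#|` C `\` D| + #|` H| < #|` K|)%N -> C `\` D = fset0 -> False.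
  move=> D K /fsubsetP DC sK pK lt /eqP; rewrite fsetD_eq0 => /fsubsetP CD.
  have pKC : per K C by move=> x k xC kK; apply: DC; apply: pK => //; apply: CD.
  have := fsub_card (stab_max C0 pKC); rewrite -/H; lia.
have key : forall m D K, D `<=` C -> is_fsubgroup K -> per K D ->
    (#|` C `\` D| + #|` H| < #|` K|)%N ->
    (forall e, e \in E -> #|` K| <= #|` stab (sumset (Ae e) (Be e))|)%N ->
    (#|` C `\` D| <= m)%N -> False.
  elim=> [|m IHm] D K DC sK pK lt minK szm.
    by apply: (fin D K) => //; apply/eqP; rewrite -cardfs_eq0 -leqn0.
  have [/eqP e0|/fset0Pn[c]] := boolP (C `\` D == fset0); first exact: (fin D K).
  rewrite in_fsetD => /andP[cD cC].
  case: (cover c cC) => e eE ce.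
  case: (Efacts e eE) => Ce0 CeC sKe pKe lte.
  have U := union_lemma sK sKe pK pKe DC CeC (ltac:(lia)) (ltac:(lia)) (minK e eE) ce cD.
  have cs := card_split D CeC.
  have ceD : (0 < #|` sumset (Ae e) (Be e) `\` D|)%N.
    by rewrite cardfs_gt0; apply/fset0Pn; exists c; rewrite in_fsetD cD ce.
  have kk := fsub_card (fsubsetIl K (stab (sumset (Ae e) (Be e)))).
  apply: (IHm (D `|` sumset (Ae e) (Be e)) (K `&` stab (sumset (Ae e) (Be e)))).
  - by rewrite fsubUset DC CeC.
  - exact: sgI.
  - by apply: per_U; [apply: (per_sub pK); apply: fsubsetIl | apply: (per_sub pKe); apply: fsubsetIr].
  - lia.
  - move=> e' e'E; have := minK e' e'E; lia.
  - lia.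
have [c cC] := fset0Pn _ C0.
case: (cover c cC) => e0 e0E _.
have Pex : exists k, has (fun e => #|` stab (sumset (Ae e) (Be e))| == k) E.
  by exists #|` stab (sumset (Ae e0) (Be e0))|; apply/hasP; exists e0.
case: (ex_minnP Pex) => k0 /hasP[e1 e1E /eqP ke1] kmin.
case: (Efacts e1 e1E) => Ce0 CeC sKe pKe lte.
apply: (key _ _ _ CeC sKe pKe lte _ (leqnn _)).
move=> e eE; rewrite ke1; apply: kmin; apply/hasP; exists e => //.
Qed.

End K.
End Helpers.
Import Helpers.

Theorem proposition2p3 (G : zmodType) (A B : {fset G}) :
  A != fset0 -> B != fset0 ->
  (forall H : {fset G}, is_fsubgroup H -> (1 < #|` H|)%N ->
     forall a b : G,
       (#|` (fcoset a H `&` A)| + #|` (fcoset b H `&` B)| <= #|` H| + 1)%N) ->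
  forall S T : {fset G}, S != fset0 -> T != fset0 ->
    S `<=` A -> T `<=` B ->
    (#|` S| + #|` T| - 1 <= #|` sumset S T|)%N.
Proof.
move=> A0 B0 hyp S T S0 T0 SA TB.
have C0 := stab_nonempty_sum S0 T0.
have sH := stab_sub C0.
have h0 := sg_gt0 sH.
have kn := kneser (n := #|` sumset T (stab (sumset S T))|) S0 T0 (leq_pmulr _ h0).
set C := sumset S T in C0 sH h0 kn *.
set H := stab C in sH h0 kn *.
have sS := fsub_card (sub_sumsetK S sH).
have sT := fsub_card (sub_sumsetK T sH).
case: (ltnP 1 #|` H|) => hH; last by lia.
have [s sS'] := fset0Pn _ S0.
have [t tT'] := fset0Pn _ T0.
have lb : forall (X Y : {fset G}) (x : G), x \in X -> X `<=` Y ->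
    (#|` H| <= #|` fcoset x H `&` Y| + (#|` sumset X H| - #|` X|))%N.
  move=> X Y x xX XY.
  have XXH := sub_sumsetK X sH.
  rewrite -(cardfsDS XXH) -(card_fcoset x H) -(cardfsID X (fcoset x H)).
  apply: leq_add; apply: fsub_card.
    by apply: fsetIS.
  apply/fsubsetP => z; rewrite !in_fsetD => /andP[zX]; rewrite zX in_fcoset => zH /=.
  by rewrite -(GRing.subrK x z) GRing.addrC; apply: mem_sumset.
have l1 := lb S A s sS' SA.
have l2 := lb T B t tT' TB.
have := hyp H sH hH s t.
lia.
Qed.
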